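(* Let $r$ be a Hermitian symmetric polynomial in one complex variable with $r(p,\overline p)=0$ for some $p\in\mathbb{C}$. If $r\in\mathcal{Q}'(1)$, then $r$ is divisible, as a polynomial in $z$ and $\overline z$, by $|z-p|^2=(z-p)(\overline z-\overline p)$.
   Context: $\mathcal{Q}'(1)$: Hermitian symmetric polynomials $r$ in one variable with $r(z,\overline z)\ge0$ for all $z$ for which there exist a Hermitian symmetric polynomial $s\ge0$, not identically $0$, and a holomorphic polynomial mapping $F$ with $rs=\|F\|^2$. *)

(* Defs.v *)
From HB Require Import structures.
From mathcomp Require Import all_boot all_order all_algebra.
From mathcomp Require Import complex.
From mathcomp Require Import Rstruct.
Set Implicit Arguments. Unset Strict Implicit. Unset Printing Implicit Defensive.
Import Order.TTheory GRing.Theory Num.Theory.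
Local Open Scope ring_scope.

Definition C : numClosedFieldType := (Rdefinitions.R)[i].

(** Polynomials in two variables z and w (w stands for \overline z):
    an element P : {poly {poly C}} is a polynomial in the OUTER variable w
    whose coefficients are polynomials in the INNER variable z. *)
Notation bipoly := {poly {poly C}}.

Definition bicoef (P : bipoly) (a b : nat) : C := (P`_b)`_a.

Definition herm_sym (P : bipoly) : Prop :=
  forall a b : nat, bicoef P a b = (bicoef P b a)^*.

Definition bieval (P : bipoly) (z w : C) : C :=
  (map_poly (fun q : {poly C} => q.[z]) P).[w].

Definition diag_eval (P : bipoly) (z : C) : C := bieval P z z^*.

Definition holo (f : {poly C}) : bipoly := f%:P.

Definition antiholo (f : {poly C}) : bipoly :=
  map_poly (fun c : C => (c^*)%:P) f.

Definition normsq (N : nat) (F : 'I_N -> {poly C}) : bipoly :=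
  \sum_(j < N) holo (F j) * antiholo (F j).

Definition diag_nonneg (P : bipoly) : Prop := forall z : C, 0 <= diag_eval P z.

Definition Qprime1 (r : bipoly) : Prop :=
  herm_sym r /\ diag_nonneg r /\
  exists s : bipoly, herm_sym s /\ diag_nonneg s /\ s != 0 /\
    exists (N : nat) (F : 'I_N -> {poly C}), r * s = normsq F.

Definition absdiff2 (p : C) : bipoly :=
  ('X - p%:P)%:P * ('X - (p^*)%:P%:P).

(* Main.v *)
Require Import Defs.
From HB Require Import structures.
From mathcomp Require Import all_boot all_order all_algebra.
Import Order.TTheory GRing.Theory Num.Theory.
Local Open Scope ring_scope.

Definition phi (p : C) (P : bipoly) : {poly C} := map_poly (horner_eval p) P.
Definition psi (c : C) (P : bipoly) : {poly C} := P.[c%:P].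

Lemma phiM p (P Q : bipoly) : phi p (P * Q) = phi p P * phi p Q.
Proof. by rewrite /phi rmorphM. Qed.
Lemma psiM c (P Q : bipoly) : psi c (P * Q) = psi c P * psi c Q.
Proof. by rewrite /psi hornerM. Qed.

Lemma phi0_div p (P : bipoly) : phi p P = 0 ->
  exists q : bipoly, P = q * ('X - p%:P)%:P.
Proof.
move=> H; exists (map_poly (fun q => q %/ ('X - p%:P)) P).
apply/polyP=> b; rewrite coefMC coef_map_id0 ?div0p //.
have : (phi p P)`_b = 0 by rewrite H coef0.
rewrite /phi coef_map /= => hb.
by rewrite divpK // dvdp_XsubCl; apply/eqP; rewrite -hb.
Qed.

Lemma div_D p (P : bipoly) : phi p P = 0 -> psi (p^*) P = 0 ->
  exists q : bipoly, P = q * absdiff2 p.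
Proof.
move=> H1 H2; have [q1 Hq1] := phi0_div _ _ H1.
have : psi p^* q1 * ('X - p%:P) = 0.
  by rewrite -H2 Hq1 psiM /psi hornerC.
move/eqP; rewrite mulf_eq0 polyXsubC_eq0 orbF => /eqP H3.
have /factor_theorem [q2 Hq2] : root q1 (p^*)%:P by rewrite /root -/(psi _ _) H3.
exists q2; rewrite Hq1 Hq2 /absdiff2.
by rewrite -mulrA [X in q2 * X]mulrC.
Qed.

Lemma size_herm (r : bipoly) : herm_sym r -> forall a : nat, leq (size r`_a) (size r).
Proof.
move=> Hr a; apply/leq_sizeP => j hj.
have := Hr j a; rewrite /bicoef => ->.
by rewrite (nth_default 0 hj) coef0 rmorph0.
Qed.

Lemma psi_herm (r : bipoly) p : herm_sym r ->
  psi p^* r = map_poly Num.conj (phi p r).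
Proof.
move=> Hr; apply/polyP=> a.
rewrite /psi (horner_coef_wide _ (leqnn (size r))) coef_sum.
rewrite coef_map /phi coef_map /= /horner_eval (horner_coef_wide _ (@size_herm r Hr a)).
rewrite rmorph_sum; apply: eq_bigr => i _.
rewrite -(rmorphXn (@polyC C)). rewrite (@coefMC C) rmorphM rmorphXn /=.
by have := Hr a i; rewrite /bicoef => ->.
Qed.

Lemma diag_evalE (P : bipoly) z : diag_eval P z = (map_poly (horner_eval z) P).[z^*].
Proof. by []. Qed.

Lemma diag_evalM (P Q : bipoly) z : diag_eval (P * Q) z = diag_eval P z * diag_eval Q z.
Proof. by rewrite !diag_evalE rmorphM hornerM. Qed.

Lemma antiholo_map z (f : {poly C}) :
  map_poly (horner_eval z) (antiholo f) = map_poly Num.conj f.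
Proof.
apply/polyP=> i; rewrite coef_map /antiholo coef_map_id0 ?rmorph0 //.
by rewrite coef_map /= /horner_eval hornerC.
Qed.

Lemma diag_sum N (G : 'I_N -> bipoly) z :
  diag_eval (\sum_(j < N) G j) z = \sum_(j < N) diag_eval (G j) z.
Proof. by rewrite diag_evalE rmorph_sum horner_sum. Qed.

Lemma diag_holo f z : diag_eval (holo f) z = f.[z].
Proof. by rewrite diag_evalE /holo map_polyC hornerC. Qed.

Lemma diag_antiholo f z : diag_eval (antiholo f) z = (f.[z])^*.
Proof. by rewrite diag_evalE antiholo_map horner_map. Qed.

Lemma diag_normsq N (F : 'I_N -> {poly C}) z :
  diag_eval (normsq F) z = \sum_(j < N) (F j).[z] * ((F j).[z])^*.
Proof.
rewrite /normsq diag_sum; apply: eq_bigr => j _.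
by rewrite diag_evalM diag_holo diag_antiholo.
Qed.

Lemma antiholoE (h : {poly C}) : antiholo h = map_poly polyC (map_poly Num.conj h).
Proof. by rewrite /antiholo -map_poly_comp. Qed.

Lemma antiholoM (f g : {poly C}) : antiholo (f * g) = antiholo f * antiholo g.
Proof. by rewrite !antiholoE !rmorphM. Qed.

Lemma antiholoX p : antiholo ('X - p%:P) = 'X - (p^*)%:P%:P.
Proof. by rewrite antiholoE !rmorphB /= !map_polyX !map_polyC. Qed.

Lemma normsq_factor p N (F : 'I_N -> {poly C}) : (forall j, (F j).[p] = 0) ->
  exists G : 'I_N -> {poly C}, normsq F = absdiff2 p * normsq G.
Proof.
move=> HF; exists (fun j => F j %/ ('X - p%:P)).
rewrite /normsq mulr_sumr; apply: eq_bigr => j _.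
have {1 2}-> : F j = (F j %/ ('X - p%:P)) * ('X - p%:P).
  by rewrite divpK // dvdp_XsubCl /root HF.
rewrite /holo rmorphM antiholoM antiholoX /absdiff2.
by rewrite mulrACA mulrC.
Qed.

Lemma absdiff2_neq0 p : absdiff2 p != 0.
Proof. by rewrite /absdiff2 mulf_neq0 // ?polyC_eq0 polyXsubC_eq0. Qed.

Lemma size_absdiff2 p : size (absdiff2 p) = 2.
Proof. by rewrite /absdiff2 size_Cmul ?polyXsubC_eq0 // size_XsubC. Qed.

Lemma phiD p : phi p (absdiff2 p) = 0.
Proof. by rewrite /absdiff2 phiM /phi map_polyC /= /horner_eval hornerXsubC subrr mul0r. Qed.

Lemma psiD p : psi p^* (absdiff2 p) = 0.
Proof. by rewrite /absdiff2 psiM /psi hornerXsubC subrr mulr0. Qed.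

Lemma main_ind (r : bipoly) p : herm_sym r -> diag_eval r p = 0 ->
  forall n (s : bipoly), (size s <= n)%N -> s != 0 ->
  (exists N (F : 'I_N -> {poly C}), r * s = normsq F) ->
  exists q : bipoly, r = q * absdiff2 p.
Proof.
move=> Hr Hp; elim=> [|n IH] s Hs s0 [N [F HF]].
  by move: s0; rewrite -size_poly_eq0 -leqn0 Hs.
have HF0 : forall j, (F j).[p] = 0.
  have H0 : \sum_(j < N) (F j).[p] * ((F j).[p])^* = 0.
    by rewrite -diag_normsq -HF diag_evalM Hp mul0r.
  move=> j; apply/eqP; rewrite -mul_conjC_eq0; apply/eqP.
  by apply: (psumr_eq0P _ H0) => // i _; rewrite mul_conjC_ge0.
have [G HG] := normsq_factor _ _ _ HF0.
rewrite HG in HF.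
have H1 : phi p r * phi p s = 0 by rewrite -phiM HF phiM phiD mul0r.
have H2 : psi p^* r * psi p^* s = 0 by rewrite -psiM HF psiM psiD mul0r.
have Epsi : (psi p^* r == 0) = (phi p r == 0).
  by rewrite psi_herm // map_poly_eq0.
have [Hphi|Hphi] := eqVneq (phi p r) 0.
  by apply: div_D => //; apply/eqP; rewrite Epsi Hphi.
have Hs1 : phi p s = 0.
  by move/eqP: H1; rewrite mulf_eq0 (negbTE Hphi) => /eqP.
have Hs2 : psi p^* s = 0.
  by move/eqP: H2; rewrite mulf_eq0 Epsi (negbTE Hphi) => /eqP.
have [s2 Es2] := div_D _ _ Hs1 Hs2.
have s20 : s2 != 0 by apply: contraNneq s0 => E; rewrite Es2 E mul0r.
apply: (IH s2) => //.
  move: Hs; rewrite Es2 size_mul ?absdiff2_neq0 // size_absdiff2 addn2 /=.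
  by [].
exists N, G; apply: (mulIf (absdiff2_neq0 p)).
by rewrite -mulrA -Es2 HF mulrC.
Qed.

Theorem lemma4p2 (r : bipoly) (p : C) :
  herm_sym r -> diag_eval r p = 0 -> Qprime1 r ->
  exists q : bipoly, r = q * absdiff2 p.
Proof.
move=> Hr Hp [_ [_ [s [_ [_ [s0 HF]]]]]].
exact: (main_ind _ _ Hr Hp _ _ (leqnn (size s)) s0 HF).
Qed.
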